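(* For $n\ge 0$ let $s_n=\sum_{r=0}^{n}1/r!$. For every positive integer $k$ there exists a constant $n(k)$ such that for all $n\ge n(k)$, among the $k$ consecutive partial sums $s_n, s_{n+1},\dots,s_{n+k-1}$ at most two are convergents of the simple continued fraction expansion of $e$.
   Context: The convergents of $e$ are the rationals obtained by truncating the simple continued fraction expansion of $e$; a partial sum $s_n$ ''is a convergent'' if it equals one of these rationals. *)

(* Defs.v *)
From Stdlib Require Import Reals ZArith Lia Lra.
Open Scope R_scope.

(* Partial sums s_n = sum_{r=0}^{n} 1/r!  (sum_f_R0 f n has n+1 terms). *)
Definition s (n : nat) : R := sum_f_R0 (fun r => / INR (fact r)) n.

Definition rfloor (x : R) : Z := (up x - 1)%Z.

Fixpoint cq (x : R) (k : nat) : R :=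
  match k with
  | O => x
  | S k' => / (cq x k' - IZR (rfloor (cq x k')))
  end.

Definition pq (x : R) (k : nat) : Z := rfloor (cq x k).

(* Numerators/denominators of convergents by the standard recurrence:
   returns ((p_n, q_n), (p_{n-1}, q_{n-1})) with p_{-1} = 1, q_{-1} = 0. *)
Fixpoint cf_pq (a : nat -> Z) (n : nat) : (Z * Z) * (Z * Z) :=
  match n with
  | O => ((a O, 1%Z), (1%Z, 0%Z))
  | S m =>
      let '((p, q), (p', q')) := cf_pq a m in
      (((a n * p + p')%Z, (a n * q + q')%Z), (p, q))
  end.

Definition convergent (x : R) (n : nat) : R :=
  let '((p, q), _) := cf_pq (pq x) n in IZR p / IZR q.

(* r is a convergent of x: r equals p_n/q_n for some index n at which the
   expansion of x is still defined (it has not terminated before step n). *)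
Definition is_convergent (x r : R) : Prop :=
  exists n : nat,
    (forall j : nat, (j < n)%nat -> cq x j <> IZR (rfloor (cq x j))) /\
    r = convergent x n.

(* Main.v *)
Require Import Defs.
From Stdlib Require Import Reals ZArith Lia Lra.
Open Scope Z_scope.
Lemma divL (a b M : Z) : 0 < a -> 0 < b -> (a | M) -> (b | M) -> (a*b | M * Z.gcd a b).
Proof.
  intros Ha Hb [r Hr] HbM.
  assert (Hg0 : Z.gcd a b <> 0).
  { intro H. apply Z.gcd_eq_0_l in H. lia. }
  destruct (Z.gcd_divide_l a b) as [a' Ha'].
  destruct (Z.gcd_divide_r a b) as [b' Hb'].
  set (g := Z.gcd a b) in *.
  assert (Hc : Z.gcd a' b' = 1).
  { assert (E1 : a / g = a') by (rewrite Ha'; apply Z.div_mul; auto).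
    assert (E2 : b / g = b') by (rewrite Hb'; apply Z.div_mul; auto).
    rewrite <- E1, <- E2. apply Z.gcd_div_gcd; auto. }
  clearbody g. assert (Hd : (b' | r * a')).
  { rewrite Hr, Ha', Hb' in HbM.
    apply (Z.mul_divide_cancel_l _ _ g); auto.
    replace (g * b') with (b' * g) by ring.
    replace (g * (r * a')) with (r * (a' * g)) by ring. exact HbM. }
  assert (Hd2 : (b' | r)).
  { apply (Z.gauss _ a'). rewrite Z.mul_comm. exact Hd.
    rewrite Z.gcd_comm. exact Hc. }
  destruct Hd2 as [s Hs].
  exists s. rewrite Hr, Hs. rewrite Hb'. ring.
Qed.

Lemma combZ (d1 d2 d3 N1 N2 N3 F3 A12 A13 A23 T12 T13 T23 : Z) :
  0 < d1 -> 0 < d2 -> 0 < d3 -> (d1 | N1) -> (d2 | N2) -> (d3 | N3) ->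
  (d1 | F3) -> (d2 | F3) -> (d3 | F3) -> 0 < F3 ->
  N2 = N1*A12 + T12 -> N3 = N1*A13 + T13 -> N3 = N2*A23 + T23 ->
  0 < T12 -> 0 < T13 -> 0 < T23 ->
  d1*d2*d3 <= F3*T12*T13*T23.
Proof.
  intros h1 h2 h3 n1 n2 n3 f1 f2 f3 hF e12 e13 e23 t12 t13 t23.
  assert (H12 : (d1*d2 | F3 * T12)).
  { apply (Z.divide_trans _ (F3 * Z.gcd d1 d2)). apply divL; auto.
    apply Z.mul_divide_mono_l.
    assert (E : T12 = N2 - N1 * A12) by lia. rewrite E.
    apply Z.divide_sub_r.
    - apply (Z.divide_trans _ d2). apply Z.gcd_divide_r. auto.
    - apply Z.divide_mul_l. apply (Z.divide_trans _ d1). apply Z.gcd_divide_l. auto. }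
  assert (H123 : (d1*d2*d3 | F3 * T12 * Z.gcd (d1*d2) d3)).
  { apply divL; try nia. auto. apply Z.divide_mul_l. auto. }
  assert (Hc : (Z.gcd (d1*d2) d3 | T13 * T23)).
  { assert (E : T13 * T23 = N3 * (N3 - N1*A13 - N2*A23) + (N1*N2)*(A13*A23)).
    { replace T13 with (N3 - N1*A13) by lia. replace T23 with (N3 - N2*A23) by lia. ring. }
    rewrite E. apply Z.divide_add_r.
    - apply Z.divide_mul_l. apply (Z.divide_trans _ d3). apply Z.gcd_divide_r. auto.
    - apply Z.divide_mul_l. apply (Z.divide_trans _ (d1*d2)). apply Z.gcd_divide_l.
      destruct n1 as [x1 X1], n2 as [x2 X2]. exists (x1*x2). rewrite X1, X2. ring. }
  apply Z.divide_pos_le. nia.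
  apply (Z.divide_trans _ _ _ H123).
  replace (F3 * T12 * T13 * T23) with (F3 * T12 * (T13 * T23)) by ring.
  apply Z.mul_divide_mono_l. exact Hc.
Qed.
Lemma finalZ (G C B F1 F2 F3 c1 c2 c3 d1 d2 d3 : Z) :
  0 < G -> G <= F1 -> G <= F2 -> 0 < F3 -> F3 <= G * B -> 0 < B ->
  0 < d1 -> 0 < d2 -> 0 < d3 -> 0 < c1 <= C -> 0 < c2 <= C -> 0 < c3 <= C ->
  F1 < c1 * d1 * d1 -> F2 < c2 * d2 * d2 -> F3 < c3 * d3 * d3 ->
  d1 * d2 * d3 <= F3 * B * B * B -> G < C*C*C*(B*B*B*B*B*B*B).
Proof.
  intros hG hF1 hF2 hF3 hF3B hB hd1 hd2 hd3 hc1 hc2 hc3 e1 e2 e3 hX. set (X := d1*d2*d3) in *.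
  assert (H1 : F1 * F2 < (c1*d1*d1) * (c2*d2*d2)).
  { apply Z.mul_lt_mono_nonneg; lia. }
  assert (H2 : F1 * F2 * F3 < (c1*d1*d1) * (c2*d2*d2) * (c3*d3*d3)).
  { apply Z.mul_lt_mono_nonneg; nia. }
  assert (H3 : (c1*d1*d1) * (c2*d2*d2) * (c3*d3*d3) = (c1*c2*c3) * (X*X)) by (unfold X; ring).
  assert (H4 : c1*c2*c3 <= C*C*C).
  { apply Z.mul_le_mono_nonneg; try nia. }
  assert (H5 : X*X <= (F3*B*B*B)*(F3*B*B*B)).
  { apply Z.mul_le_mono_nonneg; unfold X in *; nia. }
  assert (H6 : (c1*c2*c3) * (X*X) <= (C*C*C) * ((F3*B*B*B)*(F3*B*B*B))).
  { apply Z.mul_le_mono_nonneg; unfold X in *; nia. }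
  assert (H7 : F1 * F2 * F3 < (C*C*C*F3*B*B*B*B*B*B) * F3) by nia.
  assert (H8 : F1 * F2 < C*C*C*F3*B*B*B*B*B*B).
  { apply (Z.mul_lt_mono_pos_r F3); lia. }
  assert (H9 : G * G <= F1 * F2) by (apply Z.mul_le_mono_nonneg; lia).
  assert (H10 : C*C*C*F3*B*B*B*B*B*B <= (C*C*C*(B*B*B*B*B*B*B)) * G).
  { assert (0 <= C*C*C*B*B*B*B*B*B) by nia.
    replace (C*C*C*F3*B*B*B*B*B*B) with ((C*C*C*B*B*B*B*B*B) * F3) by ring.
    replace (C*C*C*(B*B*B*B*B*B*B) * G) with ((C*C*C*B*B*B*B*B*B) * (G*B)) by ring.
    apply Z.mul_le_mono_nonneg_l; lia. }
  apply (Z.mul_lt_mono_pos_r G); lia.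
Qed.
Lemma growth (a c : nat) : exists N, forall n, (N <= n)%nat -> ((n+a)^c < fact n)%nat.
Proof.
  set (K := (2^(c+1))%nat).
  assert (HK1 : (1 <= K)%nat) by (unfold K; apply Nat.neq_0_lt_0; apply Nat.pow_nonzero; lia).
  assert (Hfk : (1 <= fact K)%nat) by (apply lt_O_fact).
  assert (Cl : forall t, ((K+t+a)^c * 2^t * fact K <= (K+a)^c * fact (K+t))%nat).
  { induction t as [|t IH].
    - rewrite Nat.add_0_r. simpl. lia.
    - assert (H1 : ((K + S t + a)^c <= 2^c * (K+t+a)^c)%nat).
      { rewrite <- Nat.pow_mul_l. apply Nat.pow_le_mono_l. lia. }
      assert (H2 : (2^c * 2 <= K + t + 1)%nat).
      { unfold K. rewrite Nat.pow_add_r. simpl. lia. }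
      replace (K + S t)%nat with (S (K+t)) by lia.
      rewrite Nat.pow_succ_r'. simpl fact.
      replace (S (K+t) + a)%nat with (K + S t + a)%nat by lia.
      set (X := ((K+t+a)^c)%nat) in *. set (Y := (2^t)%nat) in *.
      set (Z := fact (K+t)) in *. set (W := ((K+a)^c)%nat) in *.
      set (V := ((K+S t+a)^c)%nat) in *. set (U := (2^c)%nat) in *.
      assert (V * (2 * Y) * fact K <= (U * X) * (2*Y) * fact K)%nat.
      { apply Nat.mul_le_mono_r. apply Nat.mul_le_mono_r. exact H1. }
      assert ((U * X) * (2*Y) * fact K = (U*2) * (X * Y * fact K))%nat by ring.
      assert ((U*2) * (X * Y * fact K) <= (K+t+1) * (W * Z))%nat.
      { apply Nat.mul_le_mono; assumption. }
      nia. }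
  exists (K + (K+a)^c)%nat. intros n Hn.
  set (t := (n - K)%nat).
  assert (Hn' : n = (K + t)%nat) by (unfold t; lia).
  assert (Ht : ((K+a)^c <= t)%nat) by (unfold t; lia).
  assert (Ht2 : (t < 2^t)%nat) by (apply Nat.pow_gt_lin_r; lia).
  pose proof (Cl t) as C. rewrite <- Hn' in C.
  assert (Hfn : (1 <= fact n)%nat) by apply lt_O_fact.
  assert (((K+a)^c * fact n < 2^t * fact n)%nat) by (apply Nat.mul_lt_mono_pos_r; lia).
  assert ((n+a)^c * fact K * 2^t < fact n * 2^t)%nat by nia.
  assert ((n+a)^c * fact K < fact n)%nat.
  { apply (Nat.mul_lt_mono_pos_r (2^t)). apply Nat.neq_0_lt_0; apply Nat.pow_nonzero; lia. lia. }
  nia.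
Qed.
Fixpoint Nn (m : nat) : nat := match m with O => 1%nat | S m' => (S m' * Nn m' + 1)%nat end.
Fixpoint ff (m t : nat) : nat := match t with O => 1%nat | S t' => ((m + S t') * ff m t')%nat end.
Fixpoint Tt (m t : nat) : nat := match t with O => 0%nat | S t' => ((m + S t') * Tt m t' + 1)%nat end.
Open Scope nat_scope.
Lemma fact_add m t : fact (m + t) = fact m * ff m t.
Proof.
  induction t as [|t IH]. rewrite Nat.add_0_r; simpl; lia.
  replace (m + S t) with (S (m + t)) by lia. change (fact (S (m+t))) with (S (m+t) * fact (m+t)).
  rewrite IH. change (ff m (S t)) with ((m + S t) * ff m t). replace (m + S t) with (S (m+t)) by lia. ring.
Qed.
Lemma Nn_add m t : Nn (m + t) = Nn m * ff m t + Tt m t.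
Proof.
  induction t as [|t IH]. rewrite Nat.add_0_r; simpl; lia.
  replace (m + S t) with (S (m + t)) by lia. change (Nn (S (m+t))) with (S (m+t) * Nn (m+t) + 1).
  rewrite IH. change (ff m (S t)) with ((m + S t) * ff m t).
  change (Tt m (S t)) with ((m + S t) * Tt m t + 1). replace (m + S t) with (S (m+t)) by lia. ring.
Qed.
Lemma ff_bound m t : ff m t <= (m + t) ^ t.
Proof.
  induction t as [|t IH]. simpl; lia.
  change (ff m (S t)) with ((m + S t) * ff m t). rewrite Nat.pow_succ_r'.
  apply Nat.mul_le_mono_l. eapply Nat.le_trans. exact IH. apply Nat.pow_le_mono_l. lia.
Qed.
Lemma Tt_bound m t : Tt m t <= t * (m + t) ^ t.
Proof.
  induction t as [|t IH]. simpl; lia.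
  change (Tt m (S t)) with ((m + S t) * Tt m t + 1). rewrite Nat.pow_succ_r'.
  assert ((m+t)^t <= (m + S t)^t) by (apply Nat.pow_le_mono_l; lia).
  assert (1 <= (m + S t)^t) by (apply Nat.neq_0_lt_0; apply Nat.pow_nonzero; lia).
  nia.
Qed.
Lemma Tt_pos m t : 1 <= t -> 1 <= Tt m t.
Proof. destruct t. lia. intros _. simpl. lia. Qed.
Lemma ff_pos m t : 1 <= ff m t.
Proof. induction t. simpl; lia. simpl. nia. Qed.
Open Scope R_scope.

Definition Pn a n := fst (fst (cf_pq a n)).
Definition Qn a n := snd (fst (cf_pq a n)).
Definition Pp a n := fst (snd (cf_pq a n)).
Definition Qp a n := snd (snd (cf_pq a n)).

Lemma cf_S a m : cf_pq a (S m) =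
  (((a (S m) * Pn a m + Pp a m)%Z, (a (S m) * Qn a m + Qp a m)%Z), (Pn a m, Qn a m)).
Proof. unfold Pn, Qn, Pp, Qp. simpl. destruct (cf_pq a m) as [[p q] [p' q']]. reflexivity. Qed.

Lemma Pn_S a m : Pn a (S m) = (a (S m) * Pn a m + Pp a m)%Z.
Proof. unfold Pn at 1. rewrite cf_S. reflexivity. Qed.
Lemma Qn_S a m : Qn a (S m) = (a (S m) * Qn a m + Qp a m)%Z.
Proof. unfold Qn at 1. rewrite cf_S. reflexivity. Qed.
Lemma Pp_S a m : Pp a (S m) = Pn a m.
Proof. unfold Pp at 1. rewrite cf_S. reflexivity. Qed.
Lemma Qp_S a m : Qp a (S m) = Qn a m.
Proof. unfold Qp at 1. rewrite cf_S. reflexivity. Qed.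

Lemma det a n : (Pn a n * Qp a n - Pp a n * Qn a n = 1 \/ Pn a n * Qp a n - Pp a n * Qn a n = -1)%Z.
Proof.
  induction n as [|n IH].
  - unfold Pn, Qn, Pp, Qp; simpl. lia.
  - rewrite Pn_S, Qn_S, Pp_S, Qp_S. lia.
Qed.

Lemma floor_spec y : IZR (rfloor y) <= y < IZR (rfloor y) + 1.
Proof.
  unfold rfloor. destruct (archimed y) as [H1 H2]. rewrite minus_IZR. simpl. lra.
Qed.

Definition hypc (x : R) (n : nat) := forall j, (j < n)%nat -> cq x j <> IZR (rfloor (cq x j)).

Lemma pq_pos x n : hypc x n -> forall j, (1 <= j <= n)%nat -> (1 <= pq x j)%Z.
Proof.
  intros H j Hj. destruct j as [|j]. lia.
  assert (Hj' : (j < n)%nat) by lia. specialize (H j Hj').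
  destruct (floor_spec (cq x j)) as [f1 f2].
  assert (Ht : 0 < cq x j - IZR (rfloor (cq x j)) < 1).
  { split; [|lra]. destruct f1 as [f1|f1]; [lra|]. exfalso. apply H. lra. }
  unfold pq. simpl cq.
  set (y := / (cq x j - IZR (rfloor (cq x j)))).
  assert (Hy : 1 < y).
  { unfold y. rewrite <- Rinv_1. apply Rinv_lt_contravar; lra. }
  destruct (floor_spec y) as [g1 g2].
  assert (0 < IZR (rfloor y)) by lra. apply lt_IZR in H0. lia.
Qed.

Lemma Q_pos x n : hypc x n -> forall j, (j <= n)%nat ->
  (1 <= Qn (pq x) j /\ 0 <= Qp (pq x) j)%Z.
Proof.
  intros H j. induction j as [|j IH]; intros Hj.
  - unfold Qn, Qp; simpl. lia.
  - rewrite Qn_S, Qp_S. destruct IH as [A B]. lia.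
    pose proof (pq_pos x n H (S j)). nia.
Qed.

Lemma repr x n : hypc x n ->
  x * (IZR (Qn (pq x) n) + IZR (Qp (pq x) n) * (cq x n - IZR (pq x n)))
  = IZR (Pn (pq x) n) + IZR (Pp (pq x) n) * (cq x n - IZR (pq x n)).
Proof.
  induction n as [|n IH]; intros H.
  - unfold Qn, Qp, Pn, Pp; simpl. ring.
  - assert (Hn : hypc x n) by (intros j Hj; apply H; lia).
    specialize (IH Hn).
    assert (Hne := H n (Nat.lt_succ_diag_r n)).
    destruct (floor_spec (cq x n)) as [f1 f2].
    set (t := cq x n - IZR (pq x n)) in *.
    assert (Ht : 0 < t).
    { unfold t, pq. destruct f1 as [f1|f1]; [lra|]. exfalso. apply Hne. lra. }
    assert (Hy : cq x (S n) = / t) by reflexivity.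
    rewrite Pn_S, Qn_S, Pp_S, Qp_S.
    rewrite !plus_IZR, !mult_IZR.
    set (u := cq x (S n) - IZR (pq x (S n))).
    set (a := IZR (pq x (S n))).
    assert (Hyu : a + u = / t) by (unfold u, a; lra).
    set (P := IZR (Pn (pq x) n)) in *. set (Q := IZR (Qn (pq x) n)) in *.
    set (P' := IZR (Pp (pq x) n)) in *. set (Q' := IZR (Qp (pq x) n)) in *.
    clearbody P Q P' Q' a u t.
    assert (E1 : a * Q + Q' + Q * u = (Q + Q' * t) / t).
    { replace (a * Q + Q' + Q * u) with (Q * (a+u) + Q') by ring. rewrite Hyu. field. lra. }
    assert (E2 : a * P + P' + P * u = (P + P' * t) / t).
    { replace (a * P + P' + P * u) with (P * (a+u) + P') by ring. rewrite Hyu. field. lra. }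
    rewrite E1, E2. unfold Rdiv. rewrite <- Rmult_assoc, IH. reflexivity.
Qed.

Lemma err_bound x n : hypc x n ->
  x - IZR (Pn (pq x) n) / IZR (Qn (pq x) n) <= 1 / (IZR (Qn (pq x) n) * IZR (Qn (pq x) n)).
Proof.
  intros H.
  pose proof (repr x n H) as R.
  destruct (Q_pos x n H n (Nat.le_refl n)) as [q1 q2].
  destruct (floor_spec (cq x n)) as [f1 f2].
  pose proof (det (pq x) n) as D.
  set (t := cq x n - IZR (pq x n)) in *.
  assert (Ht : 0 <= t < 1) by (unfold t, pq; lra).
  apply IZR_le in q1. apply IZR_le in q2.
  assert (D' : IZR (Pn (pq x) n) * IZR (Qp (pq x) n) - IZR (Pp (pq x) n) * IZR (Qn (pq x) n) = 1
            \/ IZR (Pn (pq x) n) * IZR (Qp (pq x) n) - IZR (Pp (pq x) n) * IZR (Qn (pq x) n) = -1).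
  { destruct D as [D|D]; [left|right]; rewrite <- mult_IZR, <- mult_IZR, <- minus_IZR, D; reflexivity. }
  set (P := IZR (Pn (pq x) n)) in *. set (Q := IZR (Qn (pq x) n)) in *.
  set (P' := IZR (Pp (pq x) n)) in *. set (Q' := IZR (Qp (pq x) n)) in *.
  clearbody P Q P' Q' t.
  remember (Q + Q' * t) as Dn eqn:EDn.
  assert (HD : Q <= Dn) by (rewrite EDn; nra).
  assert (Hx : x = (P + P' * t) / Dn) by (rewrite <- R; field; nra).
  rewrite Hx.
  assert (E : (P + P' * t) / Dn - P / Q = t * (P' * Q - P * Q') / (Q * Dn)).
  { rewrite EDn. field. split; nra. }
  rewrite E.
  apply (Rmult_le_reg_r (Q * Dn)). nra.
  unfold Rdiv. rewrite Rmult_assoc, Rinv_l by nra.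
  replace (1 * / (Q * Q) * (Q * Dn)) with (Dn / Q) by (field; lra).
  apply (Rmult_le_reg_r Q). lra.
  replace (Dn / Q * Q) with Dn by (field; lra).
  replace (P' * Q - P * Q') with (-(P * Q' - P' * Q)) by ring. destruct D' as [D'|D']; rewrite D'; nra.
Qed.

Lemma conv_eq x n : convergent x n = IZR (Pn (pq x) n) / IZR (Qn (pq x) n).
Proof. unfold convergent, Pn, Qn. destruct (cf_pq (pq x) n) as [[p q] [p' q']]. reflexivity. Qed.


Lemma s_S m : s (S m) = s m + / INR (fact (S m)).
Proof. reflexivity. Qed.

Lemma fact_pos m : 0 < INR (fact m).
Proof. apply lt_0_INR. apply lt_O_fact. Qed.

Lemma s_eq m : s m = INR (Nn m) / INR (fact m).
Proof.
  induction m as [|m IH].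
  - unfold s. simpl. field.
  - rewrite s_S, IH. change (Nn (S m)) with (S m * Nn m + 1)%nat. change (fact (S m)) with (S m * fact m)%nat.
    rewrite plus_INR, !mult_INR. pose proof (fact_pos m).
    assert (INR (S m) <> 0) by (apply not_0_INR; lia). simpl (INR 1). set (A := INR (S m)) in *. set (B := INR (fact m)) in *. set (C := INR (Nn m)). clearbody A B C. field. split; lra.
Qed.

Lemma s_cv : Un_cv s (exp 1).
Proof.
  unfold exp. destruct (exist_exp 1) as [l Hl]. simpl.
  intros eps Heps. destruct (Hl eps Heps) as [N HN]. exists N. intros n Hn.
  specialize (HN n Hn). unfold R_dist. unfold Rdist in HN.
  replace (s n) with (sum_f_R0 (fun i => / INR (fact i) * 1 ^ i) n). exact HN.
  unfold s. apply sum_eq. intros. rewrite pow1. ring.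
Qed.

Lemma e_gt m : s (S m) < exp 1.
Proof.
  assert (G : Un_growing s).
  { intro n. rewrite s_S. pose proof (fact_pos (S n)). pose proof (Rinv_0_lt_compat _ H). lra. }
  pose proof (growing_ineq s (exp 1) G s_cv (S (S m))).
  rewrite s_S in H. pose proof (fact_pos (S (S m))). pose proof (Rinv_0_lt_compat _ H0). lra.
Qed.

Lemma conv_d m : is_convergent (exp 1) (s m) -> exists d : Z, (0 < d)%Z /\
  (d | Z.of_nat (Nn m))%Z /\ (d | Z.of_nat (fact m))%Z /\
  (Z.of_nat (fact m) < Z.of_nat (S m) * d * d)%Z.
Proof.
  intros [n [Hh Hs]].
  assert (Hc : hypc (exp 1) n) by exact Hh.
  rewrite conv_eq in Hs.
  pose proof (err_bound _ _ Hc) as Eb.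
  destruct (Q_pos _ _ Hc n (Nat.le_refl n)) as [q1 q2].
  pose proof (det (pq (exp 1)) n) as D.
  pose proof (e_gt m) as Eg. rewrite s_S in Eg.
  rewrite s_eq in Hs.
  set (P := Pn (pq (exp 1)) n) in *. set (Q := Qn (pq (exp 1)) n) in *.
  set (P' := Pp (pq (exp 1)) n) in *. set (Q' := Qp (pq (exp 1)) n) in *.
  clearbody P Q P' Q'.
  rewrite s_eq, Hs in Eg.
  set (F := Z.of_nat (fact m)). set (N := Z.of_nat (Nn m)).
  assert (HF : (0 < F)%Z) by (unfold F; pose proof (lt_O_fact m); lia).
  assert (E1 : (N * Q = P * F)%Z).
  { apply eq_IZR. rewrite !mult_IZR. unfold F, N. rewrite <- !INR_IZR_INZ.
    pose proof (fact_pos m). apply IZR_le in q1.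
    apply (Rmult_eq_reg_r (/ (INR (fact m) * IZR Q))).
    2:{ apply Rinv_neq_0_compat. nra. }
    replace (INR (Nn m) * IZR Q * / (INR (fact m) * IZR Q)) with (INR (Nn m) / INR (fact m)) by (field; lra).
    rewrite Hs. field. lra. }
  assert (E2 : (Q * Q < Z.of_nat (S m) * F)%Z).
  { apply lt_IZR. rewrite !mult_IZR. unfold F. rewrite <- !INR_IZR_INZ.
    apply IZR_le in q1.
    assert (/ INR (fact (S m)) < 1 / (IZR Q * IZR Q)) by lra.
    change (fact (S m)) with (S m * fact m)%nat in H. rewrite mult_INR in H.
    pose proof (fact_pos m). assert (0 < INR (S m)) by (apply lt_0_INR; lia).
    unfold Rdiv in H. rewrite Rmult_1_l in H.
    apply Rinv_lt_contravar in H. rewrite !Rinv_inv in H. exact H.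
    apply Rmult_lt_0_compat; [apply Rinv_0_lt_compat; nra| apply Rinv_0_lt_compat; nra]. }
  assert (Hb : exists e : Z, (e = 1 \/ e = -1)%Z /\ (e * (P * Q' - P' * Q) = 1)%Z).
  { destruct D as [D|D]; [exists (1)%Z | exists (-1)%Z]; rewrite D; lia. }
  destruct Hb as [e [He He2]].
  set (d := (e * (N * Q' - F * P'))%Z).
  assert (Fd : F = (Q * d)%Z).
  { unfold d. transitivity (F * (e * (P * Q' - P' * Q)))%Z. rewrite He2; ring.
    replace (F * (e * (P * Q' - P' * Q)))%Z with (e * ((P * F) * Q' - F * P' * Q))%Z by ring.
    rewrite <- E1. ring. }
  assert (Hd : (0 < d)%Z) by nia.
  assert (Nd : N = (P * d)%Z).
  { apply (Z.mul_reg_r _ _ Q). lia. rewrite E1, Fd. ring. }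
  exists d. split; [exact Hd|]. split; [|split].
  - exists P. rewrite Nd. ring.
  - exists Q. rewrite Fd. ring.
  - rewrite Fd in E2 |- *. nia.
Qed.

Lemma pow_mono_kk x e1 e2 : (1 <= x)%nat -> (e1 <= e2)%nat -> (x ^ e1 <= x ^ e2)%nat.
Proof. intros. apply Nat.pow_le_mono_r; lia. Qed.

Theorem theorem3p2 :
  forall k : nat, (0 < k)%nat ->
  exists N : nat, forall n : nat, (N <= n)%nat ->
    forall i j l : nat, (i < j)%nat -> (j < l)%nat -> (l < k)%nat ->
      ~ (is_convergent (exp 1) (s (n + i)) /\
         is_convergent (exp 1) (s (n + j)) /\
         is_convergent (exp 1) (s (n + l))).
Proof.
  intros k Hk. destruct (growth k (7*k+10)) as [N HN]. exists N.
  intros n Hn i j l Hij Hjl Hlk [c1 [c2 c3]].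
  specialize (HN n Hn).
  apply conv_d in c1, c2, c3.
  destruct c1 as [d1 [p1 [n1 [f1 b1]]]].
  destruct c2 as [d2 [p2 [n2 [f2 b2]]]].
  destruct c3 as [d3 [p3 [n3 [f3 b3]]]].
  destruct (Nat.le_exists_sub (S i) j Hij) as [a0 [Ea _]].
  destruct (Nat.le_exists_sub (S j) l Hjl) as [b0 [Eb _]].
  set (a := S a0) in *. set (b := S b0) in *.
  assert (Ej : (n + j = (n + i) + a)%nat) by (unfold a; lia).
  assert (El : (n + l = (n + i) + (a + b))%nat) by (unfold a, b; lia).
  assert (El' : (n + l = (n + j) + b)%nat) by (unfold a, b; lia).
  set (m1 := (n + i)%nat) in *. set (m2 := (n + j)%nat) in *. set (m3 := (n + l)%nat) in *.
  set (x := (n + k)%nat).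
  assert (Hx1 : (1 <= x)%nat) by (unfold x; lia).
  set (B := (x ^ (k+1))%nat).
  assert (HB1 : (1 <= B)%nat) by (unfold B; apply Nat.neq_0_lt_0; apply Nat.pow_nonzero; lia).
  assert (F13 : fact m3 = (fact m1 * ff m1 (a+b))%nat) by (rewrite El; apply fact_add).
  assert (F23 : fact m3 = (fact m2 * ff m2 b)%nat) by (rewrite El'; apply fact_add).
  assert (N12 : Nn m2 = (Nn m1 * ff m1 a + Tt m1 a)%nat) by (rewrite Ej; apply Nn_add).
  assert (N13 : Nn m3 = (Nn m1 * ff m1 (a+b) + Tt m1 (a+b))%nat) by (rewrite El; apply Nn_add).
  assert (N23 : Nn m3 = (Nn m2 * ff m2 b + Tt m2 b)%nat) by (rewrite El'; apply Nn_add).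
  assert (TB : forall m t, (m + t <= x)%nat -> (t <= k)%nat -> (Tt m t <= B)%nat).
  { intros m t H1 H2. eapply Nat.le_trans. apply Tt_bound.
    unfold B. rewrite Nat.pow_add_r, Nat.pow_1_r.
    assert ((m+t)^t <= x^k)%nat.
    { eapply Nat.le_trans. apply Nat.pow_le_mono_l. exact H1. apply pow_mono_kk; lia. }
    rewrite Nat.mul_comm. apply Nat.mul_le_mono; lia. }
  assert (T12b : (Tt m1 a <= B)%nat) by (apply TB; unfold m1, x, a in *; lia).
  assert (T13b : (Tt m1 (a+b) <= B)%nat) by (apply TB; unfold m1, x, a, b in *; lia).
  assert (T23b : (Tt m2 b <= B)%nat) by (apply TB; unfold m2, x, a, b in *; lia).
  assert (T12p : (1 <= Tt m1 a)%nat) by (apply Tt_pos; unfold a; lia).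
  assert (T13p : (1 <= Tt m1 (a+b))%nat) by (apply Tt_pos; unfold a; lia).
  assert (T23p : (1 <= Tt m2 b)%nat) by (apply Tt_pos; unfold b; lia).
  assert (G1 : (fact n <= fact m1)%nat) by (unfold m1; rewrite fact_add; pose proof (ff_pos n i); nia).
  assert (G2 : (fact n <= fact m2)%nat) by (unfold m2; rewrite fact_add; pose proof (ff_pos n j); nia).
  assert (G3 : (fact m3 <= fact n * B)%nat).
  { unfold m3. rewrite fact_add. apply Nat.mul_le_mono_l.
    eapply Nat.le_trans. apply ff_bound.
    eapply Nat.le_trans. apply Nat.pow_le_mono_l. instantiate (1 := x). unfold x; lia.
    apply pow_mono_kk; lia. }
  pose proof (lt_O_fact n) as Gp. pose proof (lt_O_fact m3) as F3p.
  assert (Hc : (d1*d2*d3 <= Z.of_nat (fact m3) * Z.of_nat (Tt m1 a) * Z.of_nat (Tt m1 (a+b)) * Z.of_nat (Tt m2 b))%Z).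
  { apply (combZ d1 d2 d3 (Z.of_nat (Nn m1)) (Z.of_nat (Nn m2)) (Z.of_nat (Nn m3)) _
       (Z.of_nat (ff m1 a)) (Z.of_nat (ff m1 (a+b))) (Z.of_nat (ff m2 b))); auto.
    - apply (Z.divide_trans _ _ _ f1). rewrite F13. exists (Z.of_nat (ff m1 (a+b))). lia.
    - apply (Z.divide_trans _ _ _ f2). rewrite F23. exists (Z.of_nat (ff m2 b)). lia.
    - lia.
    - rewrite N12. lia.
    - rewrite N13. lia.
    - rewrite N23. lia.
    - lia. - lia. - lia. }
  assert (Hc2 : (d1*d2*d3 <= Z.of_nat (fact m3) * Z.of_nat B * Z.of_nat B * Z.of_nat B)%Z).
  { eapply Z.le_trans. exact Hc.
    assert (0 <= Z.of_nat (fact m3))%Z by lia.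
    apply Z.mul_le_mono_nonneg; try lia.
    apply Z.mul_le_mono_nonneg; try lia.
    apply Z.mul_le_mono_nonneg; try lia. }
  pose proof (finalZ (Z.of_nat (fact n)) (Z.of_nat x) (Z.of_nat B)
     (Z.of_nat (fact m1)) (Z.of_nat (fact m2)) (Z.of_nat (fact m3))
     (Z.of_nat (S m1)) (Z.of_nat (S m2)) (Z.of_nat (S m3)) d1 d2 d3) as Fin.
  assert (Hcon : (Z.of_nat (fact n) < Z.of_nat x * Z.of_nat x * Z.of_nat x *
     (Z.of_nat B * Z.of_nat B * Z.of_nat B * Z.of_nat B * Z.of_nat B * Z.of_nat B * Z.of_nat B))%Z).
  { apply Fin; lia. }
  assert (Ep : ((n + k) ^ (7 * k + 10) = x*x*x*(B*B*B*B*B*B*B))%nat).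
  { unfold B. fold x. replace (7*k+10)%nat with (3 + (k+1)*7)%nat by lia.
    rewrite Nat.pow_add_r, Nat.pow_mul_r. simpl. ring. }
  rewrite Ep in HN. clearbody x B. nia.
Qed.
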